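(* Let $(\Re,\oplus,\circ)$ be a commutative Krasner hyperring with identity $1\neq 0$, let $N$ be a proper hyperideal of $\Re$, and let $\phi:L(\Re)\to L(\Re)\cup\{\emptyset\}$ be a function with $\phi(N)\subseteq N$. Then the following are equivalent: (i) $N$ is a $\phi$-primary hyperideal of $\Re$; (ii) for every $a\in\Re-\sqrt{N}$, $(N:a)=N\cup(\phi(N):a)$; (iii) for every $a\in\Re-\sqrt{N}$, $(N:a)=N$ or $(N:a)=(\phi(N):a)$; (iv) for all hyperideals $K,L$ of $\Re$ with $K\circ L\subseteq N$ and $K\circ L\not\subseteq\phi(N)$, we have $K\subseteq N$ or $L\subseteq\sqrt{N}$.
   Context: A commutative Krasner hyperring with identity is $(\Re,\oplus,\circ)$ where $(\Re,\oplus)$ is a canonical hypergroup (the hyperoperation $\oplus$ is associative and commutative; there is $0$ with $a\oplus 0=\{a\}$; each $a$ has a unique $-a$ with $0\in a\oplus(-a)$; and $c\in a\oplus b$ implies $b\in c\oplus(-a)$ and $a\in c\oplus(-b)$), $(\Re,\circ)$ is a commutative semigroup with identity $1\neq0$ and $a\circ 0=0$, and $\circ$ distributes over $\oplus$. A hyperideal is a nonempty $N\subseteq\Re$ with $a\oplus(-b)\subseteq N$ and $r\circ a\in N$ for all $a,b\in N$, $r\in\Re$; $L(\Re)$ is the set of hyperideals. For $I\in L(\Re)\cup\{\emptyset\}$ and $a\in\Re$, $(I:a)=\{x\in\Re: x\circ a\in I\}$; $\sqrt{N}=\{x\in\Re: x^n\in N\text{ for some }n\geq1\}$. For hyperideals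 $K,L$, $K\circ L$ is the hyperideal generated by $\{k\circ l\}$. ''$x\in N-\phi(N)$'' means $x\in N$, $x\notin\phi(N)$. A proper hyperideal $N$ is $\phi$-primary if for all $a,b\in\Re$, $a\circ b\in N-\phi(N)$ implies $a\in N$ or $b^k\in N$ for some $k\in\mathbb{N}$. *)

(* Defs.v *)
Set Implicit Arguments.

Definition subset {T : Type} (A B : T -> Prop) : Prop := forall x, A x -> B x.
Definition set_eq {T : Type} (A B : T -> Prop) : Prop := forall x, A x <-> B x.

Record KrasnerHyperring := {
  carrier :> Type;
  hadd : carrier -> carrier -> (carrier -> Prop);
  hmul : carrier -> carrier -> carrier;
  hzero : carrier;
  hone : carrier;
  hneg : carrier -> carrier;
  hadd_nonempty : forall a b, exists c, hadd a b c;
  (* associativity: (a (+) b) (+) c = a (+) (b (+) c) *)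
  hadd_assoc : forall a b c x,
      (exists y, hadd a b y /\ hadd y c x) <-> (exists y, hadd b c y /\ hadd a y x);
  hadd_comm : forall a b x, hadd a b x <-> hadd b a x;
  hadd_zero : forall a x, hadd a hzero x <-> x = a;
  hneg_spec : forall a, hadd a (hneg a) hzero;
  hneg_unique : forall a b, hadd a b hzero -> b = hneg a;
  hadd_reversible : forall a b c,
      hadd a b c -> hadd c (hneg a) b /\ hadd c (hneg b) a;
  hmul_assoc : forall a b c, hmul a (hmul b c) = hmul (hmul a b) c;
  hmul_comm : forall a b, hmul a b = hmul b a;
  hmul_one : forall a, hmul a hone = a;
  hmul_zero : forall a, hmul a hzero = hzero;
  one_neq_zero : hone <> hzero;
  (* distributivity: a o (b (+) c) = (a o b) (+) (a o c) *)
  hmul_distr : forall a b c x,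
      (exists y, hadd b c y /\ x = hmul a y) <-> hadd (hmul a b) (hmul a c) x
}.

Section Hyperideals.
Variable R : KrasnerHyperring.

Definition hyperideal (N : R -> Prop) : Prop :=
  (exists x, N x) /\
  (forall a b x, N a -> N b -> hadd R a (hneg R b) x -> N x) /\
  (forall r a, N a -> N (hmul R r a)).

Definition proper (N : R -> Prop) : Prop := exists x, ~ N x.

Fixpoint hpow (x : R) (n : nat) : R :=
  match n with
  | O => hone R
  | S n' => hmul R x (hpow x n')
  end.

Definition hrad (N : R -> Prop) : R -> Prop :=
  fun x => exists n, 1 <= n /\ N (hpow x n).

Definition hcolon (I : R -> Prop) (a : R) : R -> Prop :=
  fun x => I (hmul R x a).

(* K o L : the hyperideal generated by { k o l | k in K, l in L } *)
Definition hprod (K L : R -> Prop) : R -> Prop :=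
  fun x => forall J, hyperideal J ->
    (forall k l, K k -> L l -> J (hmul R k l)) -> J x.

Definition phi_primary (phi : (R -> Prop) -> (R -> Prop)) (N : R -> Prop) : Prop :=
  hyperideal N /\ proper N /\
  forall a b, N (hmul R a b) -> ~ phi N (hmul R a b) ->
    N a \/ exists k, 1 <= k /\ N (hpow b k).

End Hyperideals.

Arguments hyperideal {R} N.
Arguments proper {R} N.
Arguments hpow {R} x n.
Arguments hrad {R} N _.
Arguments hcolon {R} I a _.
Arguments hprod {R} K L _.
Arguments phi_primary {R} phi N.

(* Main.v *)
Require Import Defs.
From Stdlib Require Import Classical Lia.

Section Aux.
Variable R : KrasnerHyperring.

Lemma mul_neg (a b : R) : hmul R a (hneg R b) = hneg R (hmul R a b).
Proof.
  apply hneg_unique.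
  rewrite <- (hmul_zero R a).
  apply (proj1 (hmul_distr R a b (hneg R b) (hmul R a (hzero R)))).
  exists (hzero R); split; [apply hneg_spec|reflexivity].
Qed.

Lemma neg_neg (y : R) : hneg R (hneg R y) = y.
Proof.
  symmetry; apply hneg_unique. apply hadd_comm. apply hneg_spec.
Qed.

Lemma ideal_zero (I : R -> Prop) : hyperideal I -> I (hzero R).
Proof.
  intros [[a Ha] [_ Hm]]. rewrite <- (hmul_zero R a), hmul_comm. apply Hm; auto.
Qed.

Lemma ideal_neg (I : R -> Prop) b : hyperideal I -> I b -> I (hneg R b).
Proof.
  intros [_ [_ Hm]] Hb.
  rewrite <- (hmul_one R b), <- mul_neg, hmul_comm. apply Hm.
  exact Hb.
Qed.

Lemma ideal_add (I : R -> Prop) a b c : hyperideal I -> I a -> I b -> hadd R a b c -> I c.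
Proof.
  intros HI Ha Hb Hc. destruct HI as [H1 [H2 H3]] eqn:E.
  apply (H2 a (hneg R b)); auto.
  - apply ideal_neg; auto.
  - rewrite neg_neg; auto.
Qed.

Lemma ideal_mul_r (I : R -> Prop) a r : hyperideal I -> I a -> I (hmul R a r).
Proof. intros [_ [_ Hm]] Ha. rewrite hmul_comm. apply Hm; auto. Qed.

Lemma ideal_mul_l (I : R -> Prop) a r : hyperideal I -> I a -> I (hmul R r a).
Proof. intros [_ [_ Hm]] Ha. apply Hm; auto. Qed.

Lemma mix (J : R -> Prop) u v w k : hyperideal J -> hadd R u (hneg R v) w ->
  J (hmul R k u) -> J (hmul R k v) -> J (hmul R k w).
Proof.
  intros HJ Hw Hu Hv.
  assert (H := proj1 (hmul_distr R k u (hneg R v) (hmul R k w))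
     (ex_intro _ w (conj Hw eq_refl))).
  rewrite mul_neg in H. destruct HJ as [_ [H2 _]]. apply (H2 (hmul R k u) (hmul R k v) (hmul R k w)); auto.
Qed.

Lemma mix_r (J : R -> Prop) u v w k : hyperideal J -> hadd R u (hneg R v) w ->
  J (hmul R u k) -> J (hmul R v k) -> J (hmul R w k).
Proof.
  intros HJ Hw Hu Hv. rewrite hmul_comm. rewrite hmul_comm in Hu, Hv. eapply mix; eauto.
Qed.

Lemma colon_ideal (I : R -> Prop) x : hyperideal I -> hyperideal (hcolon I x).
Proof.
  intros HI. unfold hcolon. split; [|split].
  - exists (hzero R). rewrite hmul_comm, hmul_zero. apply ideal_zero; auto.
  - intros a b w Ha Hb Hw. eapply mix_r; eauto.
  - intros r a Ha. rewrite <- hmul_assoc. apply ideal_mul_l; auto.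
Qed.

Lemma ideal_one_all (I : R -> Prop) t : hyperideal I -> I (hone R) -> I t.
Proof. intros HI H1. rewrite <- (hmul_one R t). apply ideal_mul_l; auto. Qed.

Lemma rad_main : forall s (I : R -> Prop) n m x y z, hyperideal I -> n + m = s ->
  hadd R x y z -> I (hpow x n) -> I (hpow y m) -> I (hpow z (n + m)).
Proof.
  induction s; intros I n m x y z HI Hs Hz Hx Hy.
  - destruct n; [|lia]. apply ideal_one_all; auto.
  - destruct n as [|n']; [apply ideal_one_all; auto|].
    destruct m as [|m']; [apply ideal_one_all; auto|].
    set (k := S n' + m').
    assert (E1 : n' + S m' = k) by (unfold k; lia).
    assert (E2 : S n' + S m' = S k) by (unfold k; lia).
    assert (A1 : hcolon I x (hpow z k)).
    { rewrite <- E1. apply (IHs (hcolon I x) n' (S m') x y z); auto; try lia.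
      - apply colon_ideal; auto.
      - unfold hcolon. rewrite hmul_comm. exact Hx.
      - unfold hcolon. apply ideal_mul_r; auto. }
    assert (A2 : hcolon I y (hpow z k)).
    { apply (IHs (hcolon I y) (S n') m' x y z); auto; try lia.
      - apply colon_ideal; auto.
      - unfold hcolon. apply ideal_mul_r; auto.
      - unfold hcolon. rewrite hmul_comm. exact Hy. }
    unfold hcolon in A1, A2. rewrite E2. simpl hpow. rewrite hmul_comm.
    apply (ideal_add I (hmul R (hpow z k) x) (hmul R (hpow z k) y)); auto.
    apply (proj1 (hmul_distr R (hpow z k) x y _)). exists z; auto.
Qed.

Lemma neg_pow (y : R) m : hpow (hneg R y) m = hpow y m \/ hpow (hneg R y) m = hneg R (hpow y m).
Proof.
  induction m; simpl.
  - left; reflexivity.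
  - destruct IHm as [E|E]; rewrite E.
    + right. rewrite hmul_comm, mul_neg, hmul_comm. reflexivity.
    + left. rewrite mul_neg, hmul_comm, mul_neg, neg_neg, hmul_comm. reflexivity.
Qed.

Lemma rad_closed (N : R -> Prop) x y z : hyperideal N -> hrad N x -> hrad N y ->
  hadd R x (hneg R y) z -> hrad N z.
Proof.
  intros HN [n [Hn Hx]] [m [Hm Hy]] Hz.
  exists (n + m). split; [lia|].
  apply (rad_main (n+m) N n m x (hneg R y) z); auto.
  destruct (neg_pow y m) as [E|E]; rewrite E; auto. apply ideal_neg; auto.
Qed.

Definition pr (a : R) : R -> Prop := fun x => exists r, x = hmul R r a.

Lemma pr_ideal a : hyperideal (pr a).
Proof.
  split; [|split].
  - exists a, (hone R). rewrite hmul_comm, hmul_one; auto.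
  - intros x y w [r ->] [s ->] Hw.
    rewrite (hmul_comm R r a), (hmul_comm R s a), <- mul_neg in Hw.
    destruct (proj2 (hmul_distr R a r (hneg R s) w) Hw) as [t [_ ->]].
    exists t. apply hmul_comm.
  - intros r x [s ->]. exists (hmul R r s). apply hmul_assoc.
Qed.

End Aux.

Theorem mainTheorem2 (R : KrasnerHyperring) (N : R -> Prop)
    (phi : (R -> Prop) -> (R -> Prop))
    (hN : hyperideal N) (pN : proper N)
    (hphi : forall I, hyperideal I -> hyperideal (phi I) \/ (forall x, ~ phi I x))
    (phiN : subset (phi N) N) :
  (phi_primary phi N <->
     (forall a, ~ hrad N a ->
        set_eq (hcolon N a) (fun x => N x \/ hcolon (phi N) a x))) /\
  (phi_primary phi N <->
     (forall a, ~ hrad N a ->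
        set_eq (hcolon N a) N \/ set_eq (hcolon N a) (hcolon (phi N) a))) /\
  (phi_primary phi N <->
     (forall K L, hyperideal K -> hyperideal L ->
        subset (hprod K L) N -> ~ subset (hprod K L) (phi N) ->
        subset K N \/ subset L (hrad N))).
Proof.
  assert (i_ii : phi_primary phi N -> forall a, ~ hrad N a ->
        set_eq (hcolon N a) (fun x => N x \/ hcolon (phi N) a x)).
  { intros [_ [_ H]] a Ha x; unfold hcolon; split.
    - intro Hx. destruct (classic (phi N (hmul R x a))) as [Hp|Hp]; [right; auto|].
      destruct (H x a Hx Hp) as [?|[k [Hk Hk2]]]; [left; auto|].
      exfalso; apply Ha; exists k; auto.
    - intros [Hx|Hx]; [apply ideal_mul_r; auto| apply phiN; auto]. }
  assert (ii_iii : (forall a, ~ hrad N a ->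
        set_eq (hcolon N a) (fun x => N x \/ hcolon (phi N) a x)) ->
     (forall a, ~ hrad N a ->
        set_eq (hcolon N a) N \/ set_eq (hcolon N a) (hcolon (phi N) a))).
  { intros H2 a Ha. specialize (H2 a Ha).
    destruct (classic (subset N (hcolon (phi N) a))) as [Hs|Hs].
    - right. intro x; split; intro Hx.
      + destruct (proj1 (H2 x) Hx); auto.
      + apply H2; right; auto.
    - left. apply not_all_ex_not in Hs as [x0 Hx0].
      apply imply_to_and in Hx0 as [Nx0 Px0].
      intro x; split; intro Hx.
      + destruct (proj1 (H2 x) Hx) as [|HP]; auto.
        destruct (classic (N x)) as [|Nx]; auto. exfalso.
        destruct (hphi N hN) as [Hph|Hem]; [|exact (Hem _ HP)].
        destruct (hadd_nonempty R x0 x) as [z Hz].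
        assert (Hzc : hcolon N a z).
        { unfold hcolon. apply (mix_r R N x0 (hneg R x) z a); auto.
          - rewrite neg_neg; auto.
          - apply ideal_mul_r; auto.
          - unfold hcolon in Hx. apply (ideal_neg R N) in Hx; auto.
            rewrite hmul_comm, mul_neg, hmul_comm. exact Hx. }
        destruct (proj1 (H2 z) Hzc) as [Nz|Pz].
        * apply Nx. destruct (hadd_reversible R x0 x z Hz) as [H _].
          destruct hN as [_ [Hc _]]. exact (Hc z x0 x Nz Nx0 H).
        * apply Px0. destruct (hadd_reversible R x0 x z Hz) as [_ H].
          unfold hcolon in *. eapply mix_r; eauto.
      + apply H2; left; auto. }
  assert (iii_i : (forall a, ~ hrad N a ->
        set_eq (hcolon N a) N \/ set_eq (hcolon N a) (hcolon (phi N) a)) ->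
        phi_primary phi N).
  { intros H3. split; [exact hN|split; [exact pN|]].
    intros a b Hab Hp. destruct (classic (hrad N b)) as [[k [? ?]]|Hb]; [right; eauto|].
    left. destruct (H3 b Hb) as [E|E].
    - apply E; exact Hab.
    - exfalso; apply Hp; apply E; exact Hab. }
  assert (i_iv : phi_primary phi N -> forall K L, hyperideal K -> hyperideal L ->
        subset (hprod K L) N -> ~ subset (hprod K L) (phi N) ->
        subset K N \/ subset L (hrad N)).
  { intros [_ [_ H]] K L HK HL Hsub Hnot. apply NNPP; intro Hc.
    apply not_or_and in Hc as [HnK HnL].
    apply not_all_ex_not in HnK as [a0 Ha0]; apply imply_to_and in Ha0 as [Ka0 Na0].
    apply not_all_ex_not in HnL as [b0 Hb0]; apply imply_to_and in Hb0 as [Lb0 Rb0].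
    assert (gen : forall k l, K k -> L l -> N (hmul R k l)).
    { intros k l Hk Hl. apply Hsub. intros J HJ Hg. apply Hg; auto. }
    destruct (hphi N hN) as [Hph|Hem].
    2:{ destruct (H a0 b0 (gen _ _ Ka0 Lb0) (Hem _)) as [|[k [? ?]]]; auto.
        apply Rb0; exists k; auto. }
    apply Hnot. intros x Hx. apply Hx; [exact Hph|].
    assert (A0 : forall k l, K k -> L l -> ~ N k -> ~ hrad N l -> phi N (hmul R k l)).
    { intros k l Hk Hl Nk Rl. apply NNPP; intro Hp.
      destruct (H k l (gen _ _ Hk Hl) Hp) as [|[j [? ?]]]; auto.
      apply Rl; exists j; auto. }
    assert (A : forall k l, K k -> L l -> ~ hrad N l -> phi N (hmul R k l)).
    { intros k l Hk Hl Rl. destruct (classic (N k)) as [Nk|Nk]; [|auto].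
      destruct (hadd_nonempty R k a0) as [z Hz].
      assert (Kz : K z) by (exact (ideal_add R K k a0 z HK Hk Ka0 Hz)).
      assert (Nz : ~ N z).
      { intro Nz. apply Na0. destruct (hadd_reversible R k a0 z Hz) as [H1 _].
        destruct hN as [_ [Hc _]]. exact (Hc z k a0 Nz Nk H1). }
      destruct (hadd_reversible R k a0 z Hz) as [_ H2].
      exact (mix_r R (phi N) z a0 k l Hph H2 (A0 z l Kz Hl Nz Rl) (A0 a0 l Ka0 Hl Na0 Rl)). }
    intros k l Hk Hl. destruct (classic (hrad N l)) as [Rl|Rl]; [|auto].
    destruct (hadd_nonempty R l b0) as [z Hz].
    assert (Lz : L z) by (exact (ideal_add R L l b0 z HL Hl Lb0 Hz)).
    assert (Rz : ~ hrad N z).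
    { intro Rz. apply Rb0. destruct (hadd_reversible R l b0 z Hz) as [H1 _].
      exact (rad_closed R N z l b0 hN Rz Rl H1). }
    destruct (hadd_reversible R l b0 z Hz) as [_ H2].
    exact (mix R (phi N) z b0 l k Hph H2 (A k z Hk Lz Rz) (A k b0 Hk Lb0 Rb0)). }
  assert (iv_i : (forall K L, hyperideal K -> hyperideal L ->
        subset (hprod K L) N -> ~ subset (hprod K L) (phi N) ->
        subset K N \/ subset L (hrad N)) -> phi_primary phi N).
  { intros H4. split; [exact hN|split; [exact pN|]].
    intros a b Hab Hp.
    destruct (H4 (pr R a) (pr R b) (pr_ideal R a) (pr_ideal R b)) as [E|E].
    - intros x Hx. apply Hx; [exact hN|].
      intros k l [r ->] [s ->].
      rewrite <- hmul_assoc, (hmul_assoc R a s b), (hmul_comm R a s), <- (hmul_assoc R s a b).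
      apply ideal_mul_l; auto. apply ideal_mul_l; auto.
    - intro Hs. apply Hp. apply Hs. intros J HJ Hg. apply Hg.
      + exists (hone R). rewrite hmul_comm, hmul_one; auto.
      + exists (hone R). rewrite hmul_comm, hmul_one; auto.
    - left. apply E. exists (hone R). rewrite hmul_comm, hmul_one; auto.
    - right. apply E. exists (hone R). rewrite hmul_comm, hmul_one; auto. }
  split; [|split]; split; auto.
Qed.
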